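(* Let $X$ be a topological space, $G$ a group and $\varphi\colon G\times X\to X$ a continuous action that is cocompactly expansive. Let $H\le G$ be a syndetic subgroup. Then the restricted action $\varphi|_{H\times X}\colon H\times X\to X$ is continuous and cocompactly expansive.
   Context: Write $g\cdot x=\varphi(g,x)$. For a family $\mathcal U$ of subsets of $X$ and $A\subseteq X$, write $A\prec\mathcal U$ if $A\subseteq U$ for some $U\in\mathcal U$. The action is cocompactly expansive if there exist a finite open cover $\mathcal U$ of $X$ and a compact set $K\subseteq X$ such that (1) $G\cdot K=X$, and (2) whenever $x,y\in X$ satisfy $\{g\cdot x,g\cdot y\}\prec\mathcal U\cup\{X\setminus K\}$ for every $g\in G$, then $x=y$. (Equivalently, for all $x\neq y$ there is $g$ with $\{g\cdot x,g\cdot y\}\cap K\neq\emptyset$ and $\{g\cdot x,g\cdot y\}$ not contained in any member of $\mathcal U$.) A subgroup $H\le G$ is syndetic if there is a finite set $F\subseteq G$ with $G=FH$. *)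

(* Defs.v *)
From HB Require Import structures.
From mathcomp Require Import all_boot monoid.
From mathcomp Require Import all_classical topology.
Set Implicit Arguments. Unset Strict Implicit. Unset Printing Implicit Defensive.
Local Open Scope classical_set_scope.
Local Open Scope group_scope.

Definition is_action (G : groupType) (X : Type) (phi : G -> X -> X) : Prop :=
  (forall x, phi 1 x = x) /\ (forall g h x, phi (g * h) x = phi g (phi h x)).

Definition is_subgroup (G : groupType) (H : set G) : Prop :=
  H 1 /\ (forall g h, H g -> H h -> H (g * h)) /\ (forall g, H g -> H g^-1).

Definition syndetic (G : groupType) (H : set G) : Prop :=
  exists F : seq G, forall g : G, exists f h, f \in F /\ H h /\ g = f * h.

(* Continuity of the action of the elements of S (G carries the discrete
   topology, so continuity of S x X -> X is continuity of each phi g). *)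
Definition continuous_action_on (G : groupType) (X : topologicalType)
  (S : set G) (phi : G -> X -> X) : Prop :=
  forall g, S g -> continuous (phi g).

(* A ≺ 𝒰 ∪ {X \ K}, where the finite family 𝒰 is indexed by 'I_n. *)
Definition prec_cover (X : Type) (n : nat) (U : 'I_n -> set X) (K : set X)
  (A : set X) : Prop :=
  (exists i : 'I_n, A `<=` U i) \/ A `<=` ~` K.

Definition cocompactly_expansive_on (G : groupType) (X : topologicalType)
  (S : set G) (phi : G -> X -> X) : Prop :=
  exists (n : nat) (U : 'I_n -> set X) (K : set X),
    (forall i, open (U i)) /\
    (forall x : X, exists i, U i x) /\
    compact K /\
    (forall x : X, exists g k, S g /\ K k /\ x = phi g k) /\
    (forall x y : X,
        (forall g, S g -> prec_cover U K [set phi g x; phi g y]) -> x = y).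

(* Main.v *)
Require Import Defs.
From HB Require Import structures.
From mathcomp Require Import all_boot monoid.
From mathcomp Require Import all_classical topology.
Local Open Scope classical_set_scope.
Local Open Scope group_scope.

Lemma open_fin_all (X : topologicalType) (I : eqType) (s : seq I) (A : I -> set X) :
  (forall k, open (A k)) -> open [set x | forall k, k \in s -> A k x].
Proof.
move=> oA.
have -> : [set x | forall k, k \in s -> A k x] = \big[setI/setT]_(k <- s) A k.
  elim: s => [|a s IH].
    rewrite big_nil; apply/seteqP; split => x //= _ k; by rewrite in_nil.
  rewrite big_cons -IH; apply/seteqP; split => x /=.
    move=> H; split; first by apply: H; rewrite in_cons eqxx.
    by move=> k ks; apply: H; rewrite in_cons ks orbT.
  move=> [Ha Hs] k; rewrite in_cons => /orP[/eqP->//|]; exact: Hs.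
elim/big_ind: _ => //; [exact: openT | exact: openI].
Qed.

Lemma bigU_mem (X : Type) (I : eqType) (s : seq I) (A : I -> set X) x :
  (\big[setU/set0]_(k <- s) A k) x <-> exists2 k, k \in s & A k x.
Proof.
elim: s => [|a s IH]; first by rewrite big_nil; split => // -[].
rewrite big_cons; split.
  case=> [h|/IH [k ks h]]; first by exists a => //; rewrite in_cons eqxx.
  by exists k => //; rewrite in_cons ks orbT.
move=> [k]; rewrite in_cons => /orP[/eqP->|ks h]; first by left.
by right; apply/IH; exists k.
Qed.

Theorem mainTheorem2 (X : topologicalType) (G : groupType)
  (phi : G -> X -> X) (H : set G) :
  is_action phi ->
  continuous_action_on setT phi ->
  cocompactly_expansive_on setT phi ->
  is_subgroup H ->
  syndetic H ->
  continuous_action_on H phi /\ cocompactly_expansive_on H phi.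
Proof.
move=> [act1 actM] cont [n [U [K [oU [cU [cK [cov exp]]]]]]] [H1 [HM HV]] [F HF].
split; first by move=> g _; apply: cont.
have inv_l f z : phi f^-1 (phi f z) = z by rewrite -actM mulVg act1.
have inv_r f z : phi f (phi f^-1 z) = z by rewrite -actM mulgV act1.
pose m := size F.
pose T := {ffun 'I_m -> 'I_n}.
pose V := fun j : 'I_#|{: T}| =>
  [set x | forall k : 'I_m, k \in enum 'I_m -> U (enum_val j k) (phi (nth 1 F k) x)].
pose K' := \big[setU/set0]_(f <- F) (phi f^-1 @` K).
exists #|{: T}|, V, K'.
split.
  move=> j; apply: (@open_fin_all X _ (enum 'I_m) (fun k : 'I_m => phi (nth 1 F k) @^-1` U (enum_val j k))).
  by move=> k; apply: open_comp => [z _|]; [apply: cont | apply: oU].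
split.
  move=> x.
  have [s Hs] := @fin_all_exists _ (fun _ => 'I_n) (fun (k : 'I_m) (i : 'I_n) => U i (phi (nth 1 F k) x))
    (fun k => cU (phi (nth 1 F k) x)).
  exists (enum_rank [ffun k => s k]) => k _; rewrite enum_rankK ffunE; exact: Hs.
split.
  apply: bigsetU_compact => f _; apply: continuous_compact => //.
  apply: continuous_subspaceT => z; exact: cont.
split.
  move=> x; have [g [k [_ [Kk ->]]]] := cov x.
  have [f [h [fF [Hh Eg]]]] := HF g^-1.
  exists h^-1, (phi f^-1 k); split; first exact: HV.
  split; first by apply/bigU_mem; exists f => //; exists k.
  by rewrite -actM -invgM -Eg invgK.
move=> x y Hxy; apply: exp => g _.
have [f [h [fF [Hh ->]]]] := HF g.
rewrite !actM.
case: (Hxy h Hh) => [[j Hj]|Hc].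
  have km : index f F < m by rewrite index_mem.
  pose k : 'I_m := Ordinal km.
  have Ek : nth 1 F k = f by rewrite /= nth_index.
  left; exists (enum_val j k) => z [->|->].
  + by rewrite -Ek; apply: (Hj (phi h x)); [left | rewrite mem_enum].
  + by rewrite -Ek; apply: (Hj (phi h y)); [right | rewrite mem_enum].
right => z [->|->] Kz.
- apply: (Hc (phi h x)); first by left.
  by apply/bigU_mem; exists f => //; exists (phi f (phi h x)).
- apply: (Hc (phi h y)); first by right.
  by apply/bigU_mem; exists f => //; exists (phi f (phi h y)).
Qed.
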